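(* Let $n\ge 2$, $d\ge 1$, and let $(p;v)$ be the canonical pair of a line $\ell$ in $[n]^d$ of odd weight. Then $\sigma(p)\equiv\sigma(p+(i-1)v)\pmod 2$ for every integer $1\le i\le\lfloor n/2\rfloor$, and $\sigma(p)\not\equiv\sigma(p+(i-1)v)\pmod 2$ for every integer $\lceil n/2\rceil< i\le n$.
   Context: Let $[n]=\{1,\dots,n\}$. For $p\in[n]^d$ and $v\in\{-1,0,1\}^d$ with $v\ne\vec 0$, if $p+tv\in[n]^d$ for all $0\le t\le n-1$, the set $\ell=\{p,p+v,\dots,p+(n-1)v\}$ is a line with initial point $p$ and direction $v$. The canonical pair of a line is its unique representation $(p;v)$ in which the first nonzero coordinate of $v$ equals $+1$; the weight of the line is the number of nonzero coordinates of this $v$. For $p\in[n]^d$ and $i\in[n]$ let $\pi_i(p)=|\{j\in[d]:p_j=i\}|$, and let $\sigma(p)=\sum_{1\le i\le n/2}\pi_i(p)$. *)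

(* Defs.v *)
From mathcomp Require Import all_boot all_order all_algebra.
Unset Strict Implicit. Unset Printing Implicit Defensive.
Import Order.TTheory GRing.Theory Num.Theory.
Local Open Scope ring_scope.

Definition in_grid (n d : nat) (p : 'I_d -> int) : Prop :=
  forall j : 'I_d, 1 <= p j <= n%:Z.

Definition padd (d : nat) (p : 'I_d -> int) (t : int) (v : 'I_d -> int) : 'I_d -> int :=
  fun j => p j + t * v j.

Definition is_line (n d : nat) (p v : 'I_d -> int) : Prop :=
  [/\ forall j : 'I_d, v j = -1 \/ v j = 0 \/ v j = 1,
      exists j : 'I_d, v j != 0 &
      forall t : nat, (t <= n - 1)%N -> in_grid n d (padd d p t%:Z v)].

Definition canonical_pair (n d : nat) (p v : 'I_d -> int) : Prop :=
  is_line n d p v /\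
  exists j : 'I_d, v j = 1 /\ forall k : 'I_d, (k < j)%N -> v k = 0.

Definition weight (d : nat) (v : 'I_d -> int) : nat := #|[pred j : 'I_d | v j != 0]|.

Definition pi_ (d : nat) (i : nat) (p : 'I_d -> int) : nat := #|[pred j : 'I_d | p j == i%:Z]|.

Definition sigma (n d : nat) (p : 'I_d -> int) : nat :=
  (\sum_(1 <= i < (n./2).+1) pi_ d i p)%N.

(* Main.v *)
Require Import Defs.
From mathcomp Require Import all_boot all_order all_algebra zify.
Import Order.TTheory GRing.Theory Num.Theory.
Local Open Scope ring_scope.

Lemma card_sumb (d : nat) (P : pred 'I_d) : #|P| = (\sum_(j < d) (P j : nat))%N.
Proof. rewrite -sum1_card big_mkcond /=; apply: eq_bigr => j _; rewrite unfold_in; by case: (P j). Qed.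

Lemma inner (x : int) (m : nat) :
  (\sum_(1 <= i < m.+1) (x == i%:Z) : nat)%N = ((1 <= x) && (x <= m%:Z) : nat).
Proof.
elim: m => [|m IH]; first by rewrite big_geq //; have -> : (1 <= x) && (x <= 0%:Z) = false by apply/negbTE/andP => -[]; lia.
rewrite big_nat_recr //= IH.
case: (boolP (x == m.+1%:Z)) => /eqP h.
  subst x. have -> : (1 <= (m.+1)%:Z) = true by lia. rewrite /=.
  have -> : ((m.+1)%:Z <= m%:Z) = false by lia.
  have -> : ((m.+1)%:Z <= (m.+1)%:Z) = true by lia. by [].
case: (boolP ((1 <= x) && (x <= m%:Z))) => /andP.
  move=> [h1 h2]. have -> : (1 <= x) && (x <= (m.+1)%:Z) = true by lia. by [].
move=> hn. have -> : (1 <= x) && (x <= (m.+1)%:Z) = false.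
  apply/negbTE/andP => [[h1 h2]]; apply: hn; split => //; lia.
by [].
Qed.

Lemma sigma_sum n d q : sigma n d q = (\sum_(j < d) (((1 <= q j) && (q j <= (n./2)%:Z))%R : nat))%N.
Proof.
rewrite /sigma /pi_.
under eq_bigr => i _ do rewrite card_sumb /=.
rewrite exchange_big /=; apply: eq_bigr => j _; exact: inner.
Qed.

Lemma key n d p v t : (2 <= n)%N -> is_line n d p v -> (t <= n - 1)%N ->
  sigma n d (padd d p t%:Z v) =
  (\sum_(j < d) ((v j == 0)%R * (((1 <= p j) && (p j <= (n./2)%:Z))%R : nat))
   + (\sum_(j < d) (v j == 1)%R) * (t.+1 <= n./2)
   + (\sum_(j < d) (v j == -1)%R) * (n - t <= n./2))%N.
Proof.
move=> hn [hv _ hg] ht.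
rewrite sigma_sum !big_distrl -!big_split /=; apply: eq_bigr => j _.
have /(_ j) /andP [a0 b0] := hg 0%N (leq0n _).
have /(_ j) /andP [a1 b1] := hg (n - 1)%N (leqnn _).
move: a0 b0 a1 b1; rewrite /padd.
have hm : (n./2 <= n)%N by rewrite -divn2 leq_div.
have hm2 : (n./2 + n./2 <= n)%N by rewrite addnn -{2}(odd_double_half n); lia.
case: (hv j) => [->|[->|->]] a0 b0 a1 b1 /=.
- rewrite !mul0n !add0n mul1n.
  have -> : p j = n%:Z by lia.
  congr (nat_of_bool _); apply/andP/idP => [[h1 h2]|h]; [lia | split; lia].
- by rewrite mul1n !mul0n !addn0 mulr0 addr0.
- rewrite !mul0n add0n mul1n addn0.
  have -> : p j = 1 by lia.
  congr (nat_of_bool _); apply/andP/idP => [[h1 h2]|h]; [lia | split; lia].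
Qed.

Theorem lemma19 (n d : nat) (p v : 'I_d -> int) :
  (2 <= n)%N -> (1 <= d)%N ->
  canonical_pair n d p v -> odd (weight d v) ->
  (forall i : nat, (1 <= i <= n./2)%N ->
     odd (sigma n d p) = odd (sigma n d (padd d p (i.-1)%:Z v))) /\
  (forall i : nat, (uphalf n < i <= n)%N ->
     odd (sigma n d p) != odd (sigma n d (padd d p (i.-1)%:Z v))).
Proof.
move=> hn hd [hl _] hw.
have K t := @key n d p v t hn hl.
set C := (\sum_(j < d) _)%N in K.
set A := (\sum_(j < d) _)%N in K.
set B := (\sum_(j < d) (v j == -1)%R : nat)%N in K.
have hv := hl; case: hv => [hv _ _].
have wAB : weight d v = (A + B)%N.
  rewrite /weight card_sumb /A /B -big_split /=; apply: eq_bigr => j _.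
  by case: (hv j) => [->|[->|->]].
have h1 := odd_double_half n; rewrite -muln2 in h1.
have h2 := uphalf_half n.
have h3 := leq_b1 (odd n).
have e0 : sigma n d p = (C + A)%N.
  have := K 0%N (leq0n _).
  have -> : sigma n d (padd d p 0%N v) = sigma n d p.
    by rewrite !sigma_sum; apply: eq_bigr => j _; rewrite /padd mul0r addr0.
  move=> ->.
  have -> : (1 <= n./2)%N = true by lia.
  have -> : (n - 0 <= n./2)%N = false by apply/negbTE; lia.
  by rewrite muln1 muln0 addn0.
move: hw; rewrite wAB oddD => hw.
split.
- move=> [|i] /andP [h0 hi]; first by [].
  rewrite (K i); last by lia.
  have -> : (i.+1 <= n./2)%N = true by lia.
  have -> : (n - i <= n./2)%N = false by apply/negbTE; lia.
  by rewrite e0 muln1 muln0 addn0.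
- move=> [|i] /andP [hi hi']; first by [].
  rewrite /= in hi hi' *.
  rewrite (K i); last by lia.
  have -> : (i.+1 <= n./2)%N = false by apply/negbTE; lia.
  have -> : (n - i <= n./2)%N = true by lia.
  rewrite e0 muln1 muln0 addn0 !oddD.
  by move: hw; case: (odd C); case: (odd A); case: (odd B).
Qed.
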